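(* For every set $S$, the category $\mathbf{CCC}_S$ of $S$-sorted cartesian closed categories is algebraic; more precisely, there is a $(\mathsf{BiMag}_S\times\mathsf{BiMag}_S)$-sorted equational presentation $(\Sigma,E)$ with $\mathbf{Alg}(\Sigma,E)\simeq\mathbf{CCC}_S$.
   Context: $\mathsf{BiMag}_S$ is the set of formal expressions generated inductively by: each $X\in S$, the symbol $1$, and $X\times Y$, $Y^X$ for $X,Y\in\mathsf{BiMag}_S$. $\mathbf{CFam}_S$ is the free cartesian closed category with object set $\mathsf{BiMag}_S$ and no generating morphisms (morphisms generated by identities, $!_X$, projections $\pi_i$, evaluations $\mathrm{ev}^Y_Z$, composition, pairing and currying, modulo the category, product and exponential laws). An $S$-sorted CCC is a CCC $\mathbf{C}$ with $\mathrm{Ob}(\mathbf{C})=\mathsf{BiMag}_S$ together with a cartesian closed identity-on-objects functor $\iota:\mathbf{CFam}_S\to\mathbf{C}$; $\mathbf{CCC}_S$ is the category of these with morphisms the functors $F$ with $F\circ\iota=\iota'$. A category with finite products $\mathbf{L}$ (a Lawvere theory) has category of models $\mathbf{Alg}\,\mathbf{L}$: product-preserving functors $\mathbf{L}\to\mathbf{Set}$ and natural transformations. A category is algebraic if it is equivalent to $\mathbf{Alg}\,\mathbf{L}$ for some such $\mathbf{L}$. For a set of sorts $T$, a $T$-sorted signature assigns to each operation symbol an arity $X_1\cdots X_n\to X$ in $T$; a $T$-sorted equational presentation $(\Sigma,E)$ is a signature with a set $E$ of equations between terms, and $\mathbf{Alg}(\Sigma,E)$ is the category of $\Sigma$-algebras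 (families of sets $A_X$, $X\in T$, with operations) satisfying $E$, with operation-preserving families of maps; such categories are algebraic. *)

(* Defs.v *)
From mathcomp Require Import all_boot.
Set Implicit Arguments. Unset Strict Implicit. Unset Printing Implicit Defensive.

Record Category := {
  Ob :> Type;
  Hom : Ob -> Ob -> Type;
  heq : forall a b, Hom a b -> Hom a b -> Prop;
  heq_refl : forall a b (f : Hom a b), heq f f;
  heq_sym : forall a b (f g : Hom a b), heq f g -> heq g f;
  heq_trans : forall a b (f g h : Hom a b), heq f g -> heq g h -> heq f h;
  idm : forall a, Hom a a;
  cmp : forall a b c, Hom b c -> Hom a b -> Hom a c;
  cmp_proper : forall a b c (f f' : Hom b c) (g g' : Hom a b),
      heq f f' -> heq g g' -> heq (cmp f g) (cmp f' g');
  cmp_id_l : forall a b (f : Hom a b), heq (cmp (idm b) f) f;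
  cmp_id_r : forall a b (f : Hom a b), heq (cmp f (idm a)) f;
  cmp_assoc : forall a b c d (f : Hom c d) (g : Hom b c) (h : Hom a b),
      heq (cmp f (cmp g h)) (cmp (cmp f g) h)
}.
Arguments idm {_} _.
Arguments cmp {_ _ _ _} _ _.
Arguments heq {_ _ _} _ _.

Record Functor (C D : Category) := {
  fobj :> C -> D;
  fmap : forall a b, Hom a b -> Hom (fobj a) (fobj b);
  fmap_proper : forall a b (f g : Hom a b), heq f g -> heq (fmap f) (fmap g);
  fmap_id : forall a, heq (fmap (idm a)) (idm (fobj a));
  fmap_cmp : forall a b c (f : Hom b c) (g : Hom a b),
      heq (fmap (cmp f g)) (cmp (fmap f) (fmap g))
}.
Arguments fmap {_ _} _ {_ _} _.

Definition Fid_obj (C : Category) (a : C) : C := a.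

Definition Fid (C : Category) : Functor C C.
Proof.
refine (@Build_Functor C C (fun a => a) (fun a b f => f) _ _ _).
- by [].
- by move=> a; apply: heq_refl.
- by move=> a b c f g; apply: heq_refl.
Defined.

Definition Fcomp (C D E : Category) (G : Functor D E) (F : Functor C D) :
  Functor C E.
Proof.
refine (@Build_Functor C E (fun a => G (F a)) (fun a b f => fmap G (fmap F f))
          _ _ _).
- by move=> a b f g H; apply: fmap_proper; apply: fmap_proper.
- move=> a; apply: heq_trans; last exact: fmap_id.
  by apply: fmap_proper; apply: fmap_id.
- move=> a b c f g; apply: heq_trans; last exact: fmap_cmp.
  by apply: fmap_proper; apply: fmap_cmp.
Defined.

Record Iso (C : Category) (a b : C) := {
  iso_f : Hom a b;
  iso_g : Hom b a;
  iso_gf : heq (cmp iso_g iso_f) (idm a);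
  iso_fg : heq (cmp iso_f iso_g) (idm b)
}.

Record NatIso (C D : Category) (F G : Functor C D) := {
  ni_comp : forall a, Iso (F a) (G a);
  ni_natural : forall a b (f : Hom a b),
      heq (cmp (iso_f (ni_comp b)) (fmap F f)) (cmp (fmap G f) (iso_f (ni_comp a)))
}.

Record CatEquiv (C D : Category) := {
  eqv_F : Functor C D;
  eqv_G : Functor D C;
  eqv_unit : NatIso (Fid C) (Fcomp eqv_G eqv_F);
  eqv_counit : NatIso (Fcomp eqv_F eqv_G) (Fid D)
}.

(* bexp X Y stands for the exponential Y^X. *)
Inductive BiMag (S : Type) : Type :=
| bvar (s : S)
| bone
| bprod (X Y : BiMag S)
| bexp (X Y : BiMag S).
Arguments bone {S}.

Inductive cterm (S : Type) : BiMag S -> BiMag S -> Type :=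
| t_id (X : BiMag S) : cterm X X
| t_comp (X Y Z : BiMag S) : cterm Y Z -> cterm X Y -> cterm X Z
| t_bang (X : BiMag S) : cterm X bone
| t_pi1 (X Y : BiMag S) : cterm (bprod X Y) X
| t_pi2 (X Y : BiMag S) : cterm (bprod X Y) Y
| t_pair (Z X Y : BiMag S) : cterm Z X -> cterm Z Y -> cterm Z (bprod X Y)
| t_ev (Y Z : BiMag S) : cterm (bprod (bexp Y Z) Y) Z
| t_curry (X Y Z : BiMag S) : cterm (bprod X Y) Z -> cterm X (bexp Y Z).
Arguments t_id {S}. Arguments t_comp {S X Y Z}. Arguments t_bang {S}.
Arguments t_pi1 {S}. Arguments t_pi2 {S}. Arguments t_pair {S Z X Y}.
Arguments t_ev {S}. Arguments t_curry {S X Y Z}.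

(* The congruence generated by the category, product and exponential laws;
   the hom-sets of CFam_S are cterm X Y modulo teq. *)
Inductive teq (S : Type) : forall X Y : BiMag S, cterm X Y -> cterm X Y -> Prop :=
| teq_refl X Y (f : cterm X Y) : teq f f
| teq_sym X Y (f g : cterm X Y) : teq f g -> teq g f
| teq_trans X Y (f g h : cterm X Y) : teq f g -> teq g h -> teq f h
| teq_comp X Y Z (f f' : cterm Y Z) (g g' : cterm X Y) :
    teq f f' -> teq g g' -> teq (t_comp f g) (t_comp f' g')
| teq_pair Z X Y (f f' : cterm Z X) (g g' : cterm Z Y) :
    teq f f' -> teq g g' -> teq (t_pair f g) (t_pair f' g')
| teq_curry X Y Z (f f' : cterm (bprod X Y) Z) :
    teq f f' -> teq (t_curry f) (t_curry f')
| teq_id_l X Y (f : cterm X Y) : teq (t_comp (t_id Y) f) f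
| teq_id_r X Y (f : cterm X Y) : teq (t_comp f (t_id X)) f
| teq_assoc W X Y Z (f : cterm Y Z) (g : cterm X Y) (h : cterm W X) :
    teq (t_comp f (t_comp g h)) (t_comp (t_comp f g) h)
| teq_bang X (f : cterm X bone) : teq f (t_bang X)
| teq_pi1_pair Z X Y (f : cterm Z X) (g : cterm Z Y) :
    teq (t_comp (t_pi1 X Y) (t_pair f g)) f
| teq_pi2_pair Z X Y (f : cterm Z X) (g : cterm Z Y) :
    teq (t_comp (t_pi2 X Y) (t_pair f g)) g
| teq_pair_eta Z X Y (h : cterm Z (bprod X Y)) :
    teq (t_pair (t_comp (t_pi1 X Y) h) (t_comp (t_pi2 X Y) h)) h
| teq_ev_curry X Y Z (f : cterm (bprod X Y) Z) :
    teq (t_comp (t_ev Y Z) (t_pair (t_comp (t_curry f) (t_pi1 X Y)) (t_pi2 X Y))) f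
| teq_curry_eta X Y Z (h : cterm X (bexp Y Z)) :
    teq (t_curry (t_comp (t_ev Y Z) (t_pair (t_comp h (t_pi1 X Y)) (t_pi2 X Y)))) h.

(* A category C with Ob(C) = BiMag_S, together with an identity-on-objects
   functor iota : CFam_S -> C (a map on cterm respecting teq, preserving
   identities and composition) which is cartesian closed: the images of
   !_X, pi_1, pi_2, ev exhibit 1, X x Y, Y^X as terminal object, product,
   exponential in C (so C is cartesian closed and iota preserves this). *)
Record SCCC (S : Type) := {
  shom : BiMag S -> BiMag S -> Type;
  sid : forall X, shom X X;
  scmp : forall X Y Z, shom Y Z -> shom X Y -> shom X Z;
  sid_l : forall X Y (f : shom X Y), scmp (sid Y) f = f;
  sid_r : forall X Y (f : shom X Y), scmp f (sid X) = f;
  sassoc : forall W X Y Z (f : shom Y Z) (g : shom X Y) (h : shom W X),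
      scmp f (scmp g h) = scmp (scmp f g) h;
  iota : forall X Y, cterm X Y -> shom X Y;
  iota_teq : forall X Y (t u : cterm X Y), teq t u -> iota t = iota u;
  iota_id : forall X, iota (t_id X) = sid X;
  iota_comp : forall X Y Z (t : cterm Y Z) (u : cterm X Y),
      iota (t_comp t u) = scmp (iota t) (iota u);
  s_terminal : forall X, exists! f : shom X bone, True;
  s_product : forall Z X Y (f : shom Z X) (g : shom Z Y),
      exists! h : shom Z (bprod X Y),
        scmp (iota (t_pi1 X Y)) h = f /\ scmp (iota (t_pi2 X Y)) h = g;
  s_exponential : forall X Y Z (f : shom (bprod X Y) Z),
      exists! h : shom X (bexp Y Z),
        forall k : shom (bprod X Y) (bprod (bexp Y Z) Y),
          scmp (iota (t_pi1 (bexp Y Z) Y)) k = scmp h (iota (t_pi1 X Y)) ->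
          scmp (iota (t_pi2 (bexp Y Z) Y)) k = iota (t_pi2 X Y) ->
          scmp (iota (t_ev Y Z)) k = f
}.
Arguments sid {_} _ _. Arguments scmp {_} _ {_ _ _} _ _. Arguments iota {_} _ {_ _} _.

(* Morphisms of CCC_S: functors F : C -> D with F o iota = iota'.  Such an
   F is necessarily the identity on objects, so it is given by its action
   on morphisms. *)
Record SCCCHom (S : Type) (C D : SCCC S) := {
  hmap : forall X Y, shom C X Y -> shom D X Y;
  hmap_id : forall X, hmap (sid C X) = sid D X;
  hmap_cmp : forall X Y Z (f : shom C Y Z) (g : shom C X Y),
      hmap (scmp C f g) = scmp D (hmap f) (hmap g);
  hmap_iota : forall X Y (t : cterm X Y), hmap (iota C t) = iota D t
}.
Arguments hmap {_ _ _} _ {_ _} _.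

Definition SCCCHom_id (S : Type) (C : SCCC S) : SCCCHom C C.
Proof. by refine (@Build_SCCCHom S C C (fun X Y f => f) _ _ _). Defined.

Definition SCCCHom_cmp (S : Type) (C D E : SCCC S)
  (G : SCCCHom D E) (F : SCCCHom C D) : SCCCHom C E.
Proof.
refine (@Build_SCCCHom S C E (fun X Y f => hmap G (hmap F f)) _ _ _).
- by move=> X; rewrite !hmap_id.
- by move=> X Y Z f g; rewrite !hmap_cmp.
- by move=> X Y t; rewrite !hmap_iota.
Defined.

Definition CCC_cat (S : Type) : Category.
Proof.
refine (@Build_Category (SCCC S) (@SCCCHom S)
          (fun C D F G => forall X Y (f : shom C X Y), hmap F f = hmap G f)
          _ _ _ (@SCCCHom_id S) (@SCCCHom_cmp S) _ _ _ _).
- by [].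
- by move=> a b f g H X Y h; rewrite H.
- by move=> a b f g h H1 H2 X Y k; rewrite H1 H2.
- by move=> a b c f f' g g' H1 H2 X Y k; rewrite /= H2 H1.
- by [].
- by [].
- by [].
Defined.

Record Signature (T : Type) := {
  sop : Type;
  sar : sop -> nat;
  sin : forall o : sop, 'I_(sar o) -> T;
  sout : sop -> T
}.
Arguments sar {T s}. Arguments sin {T s o}. Arguments sout {T s}.

Inductive Tm (T : Type) (sg : Signature T) (n : nat) (ctx : 'I_n -> T) : T -> Type :=
| tvar (i : 'I_n) : Tm sg ctx (ctx i)
| tapp (o : sop sg) (args : forall j : 'I_(sar o), Tm sg ctx (sin j)) :
    Tm sg ctx (sout o).

Record Equation (T : Type) (sg : Signature T) := {
  eq_n : nat;
  eq_ctx : 'I_eq_n -> T;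
  eq_sort : T;
  eq_lhs : Tm sg eq_ctx eq_sort;
  eq_rhs : Tm sg eq_ctx eq_sort
}.

Record Presentation (T : Type) := {
  psig : Signature T;
  pE : Type;
  peq : pE -> Equation psig
}.

Fixpoint eval (T : Type) (sg : Signature T) (A : T -> Type)
  (op : forall o : sop sg, (forall j : 'I_(sar o), A (sin j)) -> A (sout o))
  (n : nat) (ctx : 'I_n -> T) (env : forall i, A (ctx i))
  (s : T) (t : Tm sg ctx s) {struct t} : A s :=
  match t in Tm _ _ s0 return A s0 with
  | tvar i => env i
  | tapp o args => op o (fun j => eval op env (args j))
  end.

Record Alg (T : Type) (P : Presentation T) := {
  car : T -> Type;
  aop : forall o : sop (psig P), (forall j : 'I_(sar o), car (sin j)) -> car (sout o);
  asat : forall (e : pE P) (env : forall i, car (@eq_ctx _ _ (peq e) i)),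
      eval aop env (eq_lhs (peq e)) = eval aop env (eq_rhs (peq e))
}.

Record AlgHom (T : Type) (P : Presentation T) (A B : Alg P) := {
  amap : forall s, car A s -> car B s;
  amap_op : forall (o : sop (psig P)) (args : forall j, car A (sin j)),
      amap (@aop _ _ A o args) = @aop _ _ B o (fun j => amap (args j))
}.
Arguments amap {_ _ _ _} _ {_} _.

Definition AlgHom_id (T : Type) (P : Presentation T) (A : Alg P) : AlgHom A A.
Proof. by refine (@Build_AlgHom T P A A (fun s x => x) _). Defined.

Definition AlgHom_cmp (T : Type) (P : Presentation T) (A B C : Alg P)
  (g : AlgHom B C) (f : AlgHom A B) : AlgHom A C.
Proof.
refine (@Build_AlgHom T P A C (fun s x => amap g (amap f x)) _).
by move=> o args; rewrite !amap_op.
Defined.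

Definition Alg_cat (T : Type) (P : Presentation T) : Category.
Proof.
refine (@Build_Category (Alg P) (@AlgHom T P)
          (fun A B f g => forall s (x : car A s), amap f x = amap g x)
          _ _ _ (@AlgHom_id T P) (@AlgHom_cmp T P) _ _ _ _).
- by [].
- by move=> a b f g H s x; rewrite H.
- by move=> a b f g h H1 H2 s x; rewrite H1 H2.
- by move=> a b c f f' g g' H1 H2 s x; rewrite /= H2 H1.
- by [].
- by [].
- by [].
Defined.

(* Main.v *)
Require Import Defs.
From mathcomp Require Import all_boot.
From Stdlib Require Import FunctionalExtensionality ClassicalEpsilon.
Set Implicit Arguments. Unset Strict Implicit. Unset Printing Implicit Defensive.
Set Warnings "-notation-overridden".

Section HL.
Variable T : Type.
Variable d : T.

Fixpoint HL (A : T -> Type) (l : seq T) : Type :=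
  match l with [::] => unit | s :: l' => (A s * HL A l')%type end.

Lemma I0_false (j : 'I_0) : False. Proof. by case: j. Qed.

Fixpoint hget (A : T -> Type) (l : seq T) : HL A l -> forall j : 'I_(size l), A (nth d l j) :=
  match l return HL A l -> forall j : 'I_(size l), A (nth d l j) with
  | [::] => fun _ j => False_rect _ (I0_false j)
  | s :: l' => fun p j =>
     match j as j0 return A (nth d (s :: l') j0) with
     | Ordinal m H =>
       (match m as m0 return (m0 < (size l').+1) -> A (nth d (s :: l') m0) with
        | 0 => fun _ => p.1
        | m'.+1 => fun H' => @hget A l' p.2 (@Ordinal (size l') m' H')
        end) H
     end
  end.

Fixpoint tab (A : T -> Type) (l : seq T) : (forall j : 'I_(size l), A (nth d l j)) -> HL A l :=
  match l return (forall j : 'I_(size l), A (nth d l j)) -> HL A l with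
  | [::] => fun _ => tt
  | s :: l' => fun f => (f (@Ordinal (size l').+1 0 erefl),
                         @tab A l' (fun j => f (@Ordinal (size l').+1 j.+1 (ltn_ord j))))
  end.

Fixpoint hlmap (A B : T -> Type) (g : forall s, A s -> B s) (l : seq T) : HL A l -> HL B l :=
  match l return HL A l -> HL B l with
  | [::] => fun _ => tt
  | s :: l' => fun p => (g s p.1, @hlmap A B g l' p.2)
  end.

Lemma hget_tab A l (f : forall j : 'I_(size l), A (nth d l j)) j : hget (tab f) j = f j.
Proof.
elim: l f j => [|s l IH] f j; first by case: (I0_false j).
case: j => [[|m] H] /=.
  by rewrite (bool_irrelevance H erefl).
rewrite IH /=.
move: (ltn_ord _) => H'; by rewrite (bool_irrelevance H' H).
Qed.

Lemma hget_tabE A l (f : forall j : 'I_(size l), A (nth d l j)) : hget (tab f) = f.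
Proof. apply: functional_extensionality_dep => j; exact: hget_tab. Qed.

Lemma hget_hlmap A B (g : forall s, A s -> B s) l (p : HL A l) j :
  hget (hlmap g p) j = g _ (hget p j).
Proof.
elim: l p j => [|s l IH] p j; first by case: (I0_false j).
case: j => [[|m] H] //=; exact (IH p.2 (@Ordinal (size l) m H)).
Qed.

Lemma hget_hlmapE A B (g : forall s, A s -> B s) l (p : HL A l) :
  hget (hlmap g p) = fun j => g _ (hget p j).
Proof. apply: functional_extensionality_dep => j; exact: hget_hlmap. Qed.
End HL.

Section Pres.
Variable S : Type.
Local Notation T := (BiMag S * BiMag S)%type.
Definition dflt : T := (bone, bone).

Inductive Op : Type :=
| o_c (X Y : BiMag S) (t : cterm X Y)
| o_comp (X Y Z : BiMag S)
| o_pair (Z X Y : BiMag S)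
| o_curry (X Y Z : BiMag S).

Definition osl (o : Op) : seq T :=
  match o with
  | o_c _ _ _ => [::]
  | o_comp X Y Z => [:: (Y, Z); (X, Y)]
  | o_pair Z X Y => [:: (Z, X); (Z, Y)]
  | o_curry X Y Z => [:: (bprod X Y, Z)]
  end.

Definition oout (o : Op) : T :=
  match o with
  | o_c X Y _ => (X, Y)
  | o_comp X Y Z => (X, Z)
  | o_pair Z X Y => (Z, bprod X Y)
  | o_curry X Y Z => (X, bexp Y Z)
  end.

Definition Sg : Signature T :=
  @Build_Signature T Op (fun o => size (osl o)) (fun o j => nth dflt (osl o) j) oout.

Section Terms.
Variable cl : seq T.
Local Notation ctx := (fun i : 'I_(size cl) => nth dflt cl i).
Local Notation TM := (@Tm T Sg (size cl) ctx).

Definition mkapp (o : Op) (p : HL TM (osl o)) : TM (oout o) :=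
  @tapp T Sg (size cl) ctx o (hget dflt p).

Definition tc X Y (t : cterm X Y) : TM (X, Y) := mkapp (o := o_c t) tt.
Definition tcomp X Y Z (a : TM (Y, Z)) (b : TM (X, Y)) : TM (X, Z) :=
  mkapp (o := o_comp X Y Z) (a, (b, tt)).
Definition tpair Z X Y (a : TM (Z, X)) (b : TM (Z, Y)) : TM (Z, bprod X Y) :=
  mkapp (o := o_pair Z X Y) (a, (b, tt)).
Definition tcurry X Y Z (a : TM (bprod X Y, Z)) : TM (X, bexp Y Z) :=
  mkapp (o := o_curry X Y Z) (a, tt).
Definition vr k (H : k < size cl) : TM (nth dflt cl k) := tvar Sg ctx (Ordinal H).

Definition mkEq s (l r : TM s) : Equation Sg := @Build_Equation T Sg (size cl) ctx s l r.

Variable A : T -> Type.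
Variable op : forall o : sop Sg, (forall j : 'I_(sar o), A (sin j)) -> A (sout o).
Variable env : forall i : 'I_(size cl), A (nth dflt cl i).

Lemma eval_mkapp o (p : HL TM (osl o)) :
  eval op env (mkapp p) = @op o (hget dflt (hlmap (fun s t => eval op env t) p)).
Proof. by rewrite hget_hlmapE. Qed.

Lemma eval_tc X Y (t : cterm X Y) :
  eval op env (tc t) = @op (o_c t) (hget dflt (l := osl (o_c t)) tt).
Proof. exact: (eval_mkapp (o := o_c t) tt). Qed.
Lemma eval_tcomp X Y Z a b :
  eval op env (@tcomp X Y Z a b) =
  @op (o_comp X Y Z) (hget dflt (l := osl (o_comp X Y Z)) (eval op env a, (eval op env b, tt))).
Proof. exact: (eval_mkapp (o := o_comp X Y Z) (a, (b, tt))). Qed.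
Lemma eval_tpair Z X Y a b :
  eval op env (@tpair Z X Y a b) =
  @op (o_pair Z X Y) (hget dflt (l := osl (o_pair Z X Y)) (eval op env a, (eval op env b, tt))).
Proof. exact: (eval_mkapp (o := o_pair Z X Y) (a, (b, tt))). Qed.
Lemma eval_tcurry X Y Z a :
  eval op env (@tcurry X Y Z a) =
  @op (o_curry X Y Z) (hget dflt (l := osl (o_curry X Y Z)) (eval op env a, tt)).
Proof. exact: (eval_mkapp (o := o_curry X Y Z) (a, tt)). Qed.
Lemma eval_vr k (H : k < size cl) : eval op env (vr H) = env (Ordinal H).
Proof. by []. Qed.
End Terms.

Inductive Eix : Type :=
| e_teq (X Y : BiMag S) (t u : cterm X Y) (_ : teq t u)
| e_compc (X Y Z : BiMag S) (t : cterm Y Z) (u : cterm X Y)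
| e_idl (X Y : BiMag S) | e_idr (X Y : BiMag S) | e_assoc (W X Y Z : BiMag S)
| e_bang (X : BiMag S)
| e_pi1 (Z X Y : BiMag S) | e_pi2 (Z X Y : BiMag S) | e_peta (Z X Y : BiMag S)
| e_beta (X Y Z : BiMag S) | e_ceta (X Y Z : BiMag S).

Definition eqs (e : Eix) : Equation Sg :=
  match e with
  | e_teq X Y t u _ => @mkEq [::] (X, Y) (tc _ t) (tc _ u)
  | e_compc X Y Z t u => @mkEq [::] (X, Z) (tc _ (t_comp t u)) (tcomp (tc _ t) (tc _ u))
  | e_idl X Y => @mkEq [:: (X, Y)] (X, Y)
        (tcomp (tc _ (t_id Y)) (@vr [:: (X, Y)] 0 erefl)) (@vr [:: (X, Y)] 0 erefl)
  | e_idr X Y => @mkEq [:: (X, Y)] (X, Y)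
        (tcomp (@vr [:: (X, Y)] 0 erefl) (tc _ (t_id X))) (@vr [:: (X, Y)] 0 erefl)
  | e_assoc W X Y Z =>
      let cl := [:: (Y, Z); (X, Y); (W, X)] in
      @mkEq cl (W, Z)
        (tcomp (@vr cl 0 erefl) (tcomp (@vr cl 1 erefl) (@vr cl 2 erefl)))
        (tcomp (tcomp (@vr cl 0 erefl) (@vr cl 1 erefl)) (@vr cl 2 erefl))
  | e_bang X => @mkEq [:: (X, bone)] (X, bone) (@vr [:: (X, bone)] 0 erefl) (tc _ (t_bang X))
  | e_pi1 Z X Y =>
      let cl := [:: (Z, X); (Z, Y)] in
      @mkEq cl (Z, X) (tcomp (tc _ (t_pi1 X Y)) (tpair (@vr cl 0 erefl) (@vr cl 1 erefl)))
        (@vr cl 0 erefl)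
  | e_pi2 Z X Y =>
      let cl := [:: (Z, X); (Z, Y)] in
      @mkEq cl (Z, Y) (tcomp (tc _ (t_pi2 X Y)) (tpair (@vr cl 0 erefl) (@vr cl 1 erefl)))
        (@vr cl 1 erefl)
  | e_peta Z X Y =>
      let cl := [:: (Z, bprod X Y)] in
      @mkEq cl (Z, bprod X Y)
        (tpair (tcomp (tc _ (t_pi1 X Y)) (@vr cl 0 erefl)) (tcomp (tc _ (t_pi2 X Y)) (@vr cl 0 erefl)))
        (@vr cl 0 erefl)
  | e_beta X Y Z =>
      let cl := [:: (bprod X Y, Z)] in
      @mkEq cl (bprod X Y, Z)
        (tcomp (tc _ (t_ev Y Z)) (tpair (tcomp (tcurry (@vr cl 0 erefl)) (tc _ (t_pi1 X Y))) (tc _ (t_pi2 X Y))))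
        (@vr cl 0 erefl)
  | e_ceta X Y Z =>
      let cl := [:: (X, bexp Y Z)] in
      @mkEq cl (X, bexp Y Z)
        (tcurry (tcomp (tc _ (t_ev Y Z)) (tpair (tcomp (@vr cl 0 erefl) (tc _ (t_pi1 X Y))) (tc _ (t_pi2 X Y)))))
        (@vr cl 0 erefl)
  end.

Definition Pres : Presentation T := @Build_Presentation T Sg Eix eqs.
End Pres.

Section SC.
Variable S : Type.
Variable C : SCCC S.
Local Notation hom := (shom C).

Definition pairC Z X Y (f : hom Z X) (g : hom Z Y) : hom Z (bprod X Y) :=
  proj1_sig (constructive_indefinite_description _ (@s_product _ C _ _ _ f g)).

Lemma pairC_spec Z X Y (f : hom Z X) (g : hom Z Y) :
  (scmp C (Defs.iota C (t_pi1 X Y)) (pairC f g) = f /\ scmp C (Defs.iota C (t_pi2 X Y)) (pairC f g) = g) /\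
  forall h, (scmp C (Defs.iota C (t_pi1 X Y)) h = f /\ scmp C (Defs.iota C (t_pi2 X Y)) h = g) -> pairC f g = h.
Proof. exact: (proj2_sig (constructive_indefinite_description _ (@s_product _ C _ _ _ f g))). Qed.

Lemma pair_pi1 Z X Y (f : hom Z X) (g : hom Z Y) : scmp C (Defs.iota C (t_pi1 X Y)) (pairC f g) = f.
Proof. by case: (pairC_spec f g) => [[]]. Qed.
Lemma pair_pi2 Z X Y (f : hom Z X) (g : hom Z Y) : scmp C (Defs.iota C (t_pi2 X Y)) (pairC f g) = g.
Proof. by case: (pairC_spec f g) => [[]]. Qed.
Lemma pair_uniq Z X Y (f : hom Z X) (g : hom Z Y) h :
  scmp C (Defs.iota C (t_pi1 X Y)) h = f -> scmp C (Defs.iota C (t_pi2 X Y)) h = g -> h = pairC f g.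
Proof. move=> H1 H2; case: (pairC_spec f g) => _ U; by rewrite (U h). Qed.
Lemma pair_eta Z X Y (h : hom Z (bprod X Y)) :
  pairC (scmp C (Defs.iota C (t_pi1 X Y)) h) (scmp C (Defs.iota C (t_pi2 X Y)) h) = h.
Proof. by rewrite -(pair_uniq (h := h)). Qed.

Definition curryC X Y Z (f : hom (bprod X Y) Z) : hom X (bexp Y Z) :=
  proj1_sig (constructive_indefinite_description _ (@s_exponential _ C _ _ _ f)).

Lemma curryC_spec X Y Z (f : hom (bprod X Y) Z) :
  (forall k : hom (bprod X Y) (bprod (bexp Y Z) Y),
     scmp C (Defs.iota C (t_pi1 (bexp Y Z) Y)) k = scmp C (curryC f) (Defs.iota C (t_pi1 X Y)) ->
     scmp C (Defs.iota C (t_pi2 (bexp Y Z) Y)) k = Defs.iota C (t_pi2 X Y) ->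
     scmp C (Defs.iota C (t_ev Y Z)) k = f) /\
  forall h : hom X (bexp Y Z),
   (forall k : hom (bprod X Y) (bprod (bexp Y Z) Y),
     scmp C (Defs.iota C (t_pi1 (bexp Y Z) Y)) k = scmp C h (Defs.iota C (t_pi1 X Y)) ->
     scmp C (Defs.iota C (t_pi2 (bexp Y Z) Y)) k = Defs.iota C (t_pi2 X Y) ->
     scmp C (Defs.iota C (t_ev Y Z)) k = f) -> curryC f = h.
Proof. exact: (proj2_sig (constructive_indefinite_description _ (@s_exponential _ C _ _ _ f))). Qed.

Lemma curry_beta X Y Z (f : hom (bprod X Y) Z) :
  scmp C (Defs.iota C (t_ev Y Z)) (pairC (scmp C (curryC f) (Defs.iota C (t_pi1 X Y))) (Defs.iota C (t_pi2 X Y))) = f.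
Proof. case: (curryC_spec f) => H _; apply: H; [exact: pair_pi1 | exact: pair_pi2]. Qed.

Lemma curry_uniq X Y Z (f : hom (bprod X Y) Z) (h : hom X (bexp Y Z)) :
  scmp C (Defs.iota C (t_ev Y Z)) (pairC (scmp C h (Defs.iota C (t_pi1 X Y))) (Defs.iota C (t_pi2 X Y))) = f ->
  h = curryC f.
Proof.
move=> E; case: (curryC_spec f) => _ U; symmetry; apply: U => k H1 H2.
by rewrite (pair_uniq H1 H2).
Qed.

Lemma curry_eta X Y Z (h : hom X (bexp Y Z)) :
  curryC (scmp C (Defs.iota C (t_ev Y Z)) (pairC (scmp C h (Defs.iota C (t_pi1 X Y))) (Defs.iota C (t_pi2 X Y)))) = h.
Proof. by rewrite -(curry_uniq (h := h)). Qed.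

Lemma bang_uniq X (f g : hom X bone) : f = g.
Proof. case: (s_terminal C X) => x [_ U]; by rewrite -(U f) // -(U g). Qed.

Definition Gcar (p : (BiMag S * BiMag S)%type) : Type := shom C p.1 p.2.

Definition Gop (o : sop (Sg S)) : (forall j : 'I_(sar o), Gcar (sin j)) -> Gcar (sout o) :=
  match o as o0 return (forall j : 'I_(size (osl o0)), Gcar (nth (dflt S) (osl o0) j)) -> Gcar (oout o0) with
  | o_c X Y t => fun _ => Defs.iota C t
  | o_comp X Y Z => fun args => let p := tab args in scmp C p.1 p.2.1
  | o_pair Z X Y => fun args => let p := tab args in pairC p.1 p.2.1
  | o_curry X Y Z => fun args => curryC (tab args).1
  end.

Lemma Gsat (e : pE (Pres S)) (env : forall i, Gcar (@eq_ctx _ _ (peq e) i)) :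
  eval Gop env (eq_lhs (peq e)) = eval Gop env (eq_rhs (peq e)).
Proof.
case: e env => /=.
all: try (move=> *; exact: iota_teq).
all: move=> *.
all: first [exact: iota_comp | by rewrite iota_id sid_l | by rewrite iota_id sid_r
  | exact: sassoc | exact: bang_uniq | exact: pair_pi1 | exact: pair_pi2 | exact: pair_eta
  | exact: curry_beta | exact: curry_eta].
Qed.

Definition GA : Alg (Pres S) := @Build_Alg _ (Pres S) Gcar Gop Gsat.
End SC.

Section FA.
Variable S : Type.
Variable A : Alg (Pres S).
Local Notation T := (BiMag S * BiMag S)%type.

Definition Fhom (X Y : BiMag S) : Type := car A (X, Y).
Definition Fio X Y (t : cterm X Y) : Fhom X Y :=
  @aop _ _ A (o_c t) (hget (dflt S) (l := osl (o_c t)) tt).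
Definition Fsid X : Fhom X X := Fio (t_id X).
Definition Fcmp X Y Z (f : Fhom Y Z) (g : Fhom X Y) : Fhom X Z :=
  @aop _ _ A (o_comp X Y Z) (hget (dflt S) (l := osl (o_comp X Y Z)) (f, (g, tt))).
Definition Fpair Z X Y (f : Fhom Z X) (g : Fhom Z Y) : Fhom Z (bprod X Y) :=
  @aop _ _ A (o_pair Z X Y) (hget (dflt S) (l := osl (o_pair Z X Y)) (f, (g, tt))).
Definition Fcurry X Y Z (f : Fhom (bprod X Y) Z) : Fhom X (bexp Y Z) :=
  @aop _ _ A (o_curry X Y Z) (hget (dflt S) (l := osl (o_curry X Y Z)) (f, tt)).

Ltac evsimp H :=
  cbn [peq Pres eqs eq_lhs eq_rhs mkEq] in H;
  rewrite ?(eval_tcomp, eval_tpair, eval_tcurry, eval_tc, eval_vr) in H.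

Lemma F_teq X Y (t u : cterm X Y) : teq t u -> Fio t = Fio u.
Proof.
move=> E; have H := @asat _ _ A (e_teq E) (hget (dflt S) (l := [::]) tt).
evsimp H; exact H.
Qed.
Lemma F_compc X Y Z (t : cterm Y Z) (u : cterm X Y) : Fio (t_comp t u) = Fcmp (Fio t) (Fio u).
Proof.
have H := @asat _ _ A (e_compc t u) (hget (dflt S) (l := [::]) tt).
evsimp H; exact H.
Qed.
Lemma F_idl X Y (f : Fhom X Y) : Fcmp (Fsid Y) f = f.
Proof.
have H := @asat _ _ A (e_idl X Y) (hget (dflt S) (l := [:: (X, Y)]) (f, tt)).
evsimp H; exact H.
Qed.
Lemma F_idr X Y (f : Fhom X Y) : Fcmp f (Fsid X) = f.
Proof.
have H := @asat _ _ A (e_idr X Y) (hget (dflt S) (l := [:: (X, Y)]) (f, tt)).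
evsimp H; exact H.
Qed.
Lemma F_assoc W X Y Z (f : Fhom Y Z) (g : Fhom X Y) (h : Fhom W X) :
  Fcmp f (Fcmp g h) = Fcmp (Fcmp f g) h.
Proof.
have H := @asat _ _ A (e_assoc W X Y Z) (hget (dflt S) (l := [:: (Y, Z); (X, Y); (W, X)]) (f, (g, (h, tt)))).
evsimp H; exact H.
Qed.
Lemma F_bang X (f : Fhom X bone) : f = Fio (t_bang X).
Proof.
have H := @asat _ _ A (e_bang X) (hget (dflt S) (l := [:: (X, bone)]) (f, tt)).
evsimp H; exact H.
Qed.
Lemma F_pi1 Z X Y (f : Fhom Z X) (g : Fhom Z Y) : Fcmp (Fio (t_pi1 X Y)) (Fpair f g) = f.
Proof.
have H := @asat _ _ A (e_pi1 Z X Y) (hget (dflt S) (l := [:: (Z, X); (Z, Y)]) (f, (g, tt))).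
evsimp H; exact H.
Qed.
Lemma F_pi2 Z X Y (f : Fhom Z X) (g : Fhom Z Y) : Fcmp (Fio (t_pi2 X Y)) (Fpair f g) = g.
Proof.
have H := @asat _ _ A (e_pi2 Z X Y) (hget (dflt S) (l := [:: (Z, X); (Z, Y)]) (f, (g, tt))).
evsimp H; exact H.
Qed.
Lemma F_peta Z X Y (h : Fhom Z (bprod X Y)) :
  Fpair (Fcmp (Fio (t_pi1 X Y)) h) (Fcmp (Fio (t_pi2 X Y)) h) = h.
Proof.
have H := @asat _ _ A (e_peta Z X Y) (hget (dflt S) (l := [:: (Z, bprod X Y)]) (h, tt)).
evsimp H; exact H.
Qed.
Lemma F_beta X Y Z (f : Fhom (bprod X Y) Z) :
  Fcmp (Fio (t_ev Y Z)) (Fpair (Fcmp (Fcurry f) (Fio (t_pi1 X Y))) (Fio (t_pi2 X Y))) = f.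
Proof.
have H := @asat _ _ A (e_beta X Y Z) (hget (dflt S) (l := [:: (bprod X Y, Z)]) (f, tt)).
evsimp H; exact H.
Qed.
Lemma F_ceta X Y Z (h : Fhom X (bexp Y Z)) :
  Fcurry (Fcmp (Fio (t_ev Y Z)) (Fpair (Fcmp h (Fio (t_pi1 X Y))) (Fio (t_pi2 X Y)))) = h.
Proof.
have H := @asat _ _ A (e_ceta X Y Z) (hget (dflt S) (l := [:: (X, bexp Y Z)]) (h, tt)).
evsimp H; exact H.
Qed.

Definition FC : SCCC S.
Proof.
refine (@Build_SCCC S Fhom Fsid Fcmp F_idl F_idr F_assoc Fio F_teq (fun X => erefl) F_compc _ _ _).
- move=> X; exists (Fio (t_bang X)); split=> // f _; symmetry; exact: F_bang.
- move=> Z X Y f g; exists (Fpair f g); split; first by rewrite F_pi1 F_pi2.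
  by move=> h [H1 H2]; rewrite -(F_peta h) H1 H2.
- move=> X Y Z f; exists (Fcurry f); split.
  + move=> k H1 H2; rewrite -(F_peta k) H1 H2; exact: F_beta.
  + move=> h Hh.
    have := Hh (Fpair (Fcmp h (Fio (t_pi1 X Y))) (Fio (t_pi2 X Y))) (F_pi1 _ _) (F_pi2 _ _).
    by move=> <-; rewrite F_ceta.
Defined.
End FA.

Section Functors.
Variable S : Type.
Local Notation T := (BiMag S * BiMag S)%type.

Lemma amap_hget (A B : Alg (Pres S)) (f : AlgHom A B) (o : Op S)
  (p : HL (car A) (osl o)) :
  amap f (@aop _ _ A o (hget (dflt S) p)) =
  @aop _ _ B o (hget (dflt S) (hlmap (fun s x => amap f x) p)).
Proof. by rewrite amap_op hget_hlmapE. Qed.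

Definition Fmap (A B : Alg (Pres S)) (f : AlgHom A B) : SCCCHom (FC A) (FC B).
Proof.
refine (@Build_SCCCHom S (FC A) (FC B) (fun X Y x => @amap _ _ _ _ f (X, Y) x) _ _ _).
- move=> X; exact: (amap_hget f (o := o_c (t_id X)) tt).
- move=> X Y Z a b; exact: (amap_hget f (o := o_comp X Y Z) (a, (b, tt))).
- move=> X Y t; exact: (amap_hget f (o := o_c t) tt).
Defined.

Definition FF : Functor (Alg_cat (Pres S)) (CCC_cat S).
Proof.
refine (@Build_Functor (Alg_cat (Pres S)) (CCC_cat S) (@FC S) Fmap _ _ _).
- by move=> A B f g H X Y x; exact: H.
- by [].
- by [].
Defined.

Lemma hmap_pair (C D : SCCC S) (F : SCCCHom C D) Z X Y (f : shom C Z X) (g : shom C Z Y) :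
  hmap F (pairC f g) = pairC (hmap F f) (hmap F g).
Proof.
apply: pair_uniq.
- by rewrite -(hmap_iota F) -hmap_cmp pair_pi1.
- by rewrite -(hmap_iota F) -hmap_cmp pair_pi2.
Qed.

Lemma hmap_curry (C D : SCCC S) (F : SCCCHom C D) X Y Z (f : shom C (bprod X Y) Z) :
  hmap F (curryC f) = curryC (hmap F f).
Proof.
apply: curry_uniq.
by rewrite -!(hmap_iota F) -hmap_cmp -hmap_pair -hmap_cmp curry_beta.
Qed.

Definition Gmap (C D : SCCC S) (F : SCCCHom C D) : AlgHom (GA C) (GA D).
Proof.
refine (@Build_AlgHom T (Pres S) (GA C) (GA D) (fun s x => hmap F x) _).
case=> [X Y t|X Y Z|Z X Y|X Y Z] args /=.
- exact: hmap_iota.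
- exact: hmap_cmp.
- exact: hmap_pair.
- exact: hmap_curry.
Defined.

Definition GG : Functor (CCC_cat S) (Alg_cat (Pres S)).
Proof.
refine (@Build_Functor (CCC_cat S) (Alg_cat (Pres S)) (@GA S) Gmap _ _ _).
- by move=> C D F F' H s x; exact: H.
- by [].
- by [].
Defined.

End Functors.

Section Equiv.
Variable S : Type.
Local Notation T := (BiMag S * BiMag S)%type.

Section UnitA.
Variable A : Alg (Pres S).
Definition cst (s : T) : car A s -> car A (s.1, s.2) :=
  match s as s0 return car A s0 -> car A (s0.1, s0.2) with (a, b) => fun x => x end.
Definition cst' (s : T) : car A (s.1, s.2) -> car A s :=
  match s as s0 return car A (s0.1, s0.2) -> car A s0 with (a, b) => fun x => x end.

Lemma pairFC Z X Y (f : Fhom A Z X) (g : Fhom A Z Y) : pairC (C := FC A) f g = Fpair f g.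
Proof. symmetry; apply: (pair_uniq (C := FC A)); [exact: F_pi1 | exact: F_pi2]. Qed.
Lemma curryFC X Y Z (f : Fhom A (bprod X Y) Z) : curryC (C := FC A) f = Fcurry f.
Proof. symmetry; apply: (curry_uniq (C := FC A)); rewrite pairFC; exact: F_beta. Qed.

Definition uf : AlgHom A (GA (FC A)).
Proof.
refine (@Build_AlgHom T (Pres S) A (GA (FC A)) cst _).
case=> [X Y t|X Y Z|Z X Y|X Y Z] args /=.
all: rewrite ?pairFC ?curryFC -{1}(hget_tabE args); reflexivity.
Defined.

Definition ug : AlgHom (GA (FC A)) A.
Proof.
refine (@Build_AlgHom T (Pres S) (GA (FC A)) A cst' _).
case=> [X Y t|X Y Z|Z X Y|X Y Z] args /=.
all: rewrite ?pairFC ?curryFC -[in RHS](hget_tabE (fun j => cst' (args j))); reflexivity.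
Defined.

Definition unitIso : Iso (C := Alg_cat (Pres S)) A (GA (FC A)).
Proof.
refine (@Build_Iso (Alg_cat (Pres S)) A (GA (FC A)) uf ug _ _).
- by case.
- by case.
Defined.
End UnitA.

Definition unitNI : NatIso (Fid (Alg_cat (Pres S))) (Fcomp (GG S) (FF S)).
Proof.
refine (@Build_NatIso _ _ (Fid (Alg_cat (Pres S))) (Fcomp (GG S) (FF S)) unitIso _).
by move=> A B f; case.
Defined.

Section CounitC.
Variable C : SCCC S.
Definition cf : SCCCHom (FC (GA C)) C.
Proof.
refine (@Build_SCCCHom S (FC (GA C)) C (fun X Y x => x) _ _ _).
- move=> X; exact: (@iota_id S C X).
- by [].
- by [].
Defined.
Definition cg : SCCCHom C (FC (GA C)).
Proof.
refine (@Build_SCCCHom S C (FC (GA C)) (fun X Y x => x) _ _ _).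
- move=> X; symmetry; exact: (@iota_id S C X).
- by [].
- by [].
Defined.
Definition counitIso : Iso (C := CCC_cat S) (FC (GA C)) C.
Proof. by refine (@Build_Iso (CCC_cat S) (FC (GA C)) C cf cg _ _). Defined.
End CounitC.

Definition counitNI : NatIso (Fcomp (FF S) (GG S)) (Fid (CCC_cat S)).
Proof.
refine (@Build_NatIso _ _ (Fcomp (FF S) (GG S)) (Fid (CCC_cat S)) counitIso _).
by [].
Defined.
End Equiv.

Theorem mainTheorem7 (S : Type) :
  exists P : Presentation (BiMag S * BiMag S)%type,
    inhabited (CatEquiv (Alg_cat P) (CCC_cat S)).
Proof.
exists (Pres S); constructor.
exact: (@Build_CatEquiv _ _ (FF S) (GG S) (unitNI S) (counitNI S)).
Qed.
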